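(* Let $G$ be an oriented graph, let $k>0$, and let $P$ be an oriented path of length $n$ with $l=l(P)\ge 1$. If $G$ has a $k$-mindegree pair, then either $G$ contains a copy of $P$ as a subgraph, or $G$ contains an independent set of size at least $\frac{k-n}{l}$.
   Context: An oriented graph is a directed graph without loops and with at most one edge between any two vertices. An oriented path is a path whose edges are oriented arbitrarily; its length is its number of edges, and $l(P)$ is the length of its longest directed subpath. An independent set is a set of vertices spanning no edges. For a directed graph $G$, a $k$-mindegree pair is a pair $(X,Y)$ of disjoint non-empty subsets of $V(G)$ such that every vertex of $X$ has at least $k$ out-neighbours in $Y$ and every vertex of $Y$ has at least $k$ in-neighbours in $X$. *)

(* Defs.v *)
From HB Require Import structures.
From mathcomp Require Import all_boot all_order all_algebra.
Set Implicit Arguments. Unset Strict Implicit. Unset Printing Implicit Defensive.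

Definition oriented (T : finType) (E : rel T) : Prop :=
  (forall x, ~~ E x x) /\ (forall x y, E x y -> ~~ E y x).

Definition mindegree_pair (T : finType) (E : rel T) (k : nat) (X Y : {set T}) : Prop :=
  [/\ [disjoint X & Y], X != set0, Y != set0,
      (forall x, x \in X -> k <= #|[set y in Y | E x y]|) &
      (forall y, y \in Y -> k <= #|[set x in X | E x y]|)]%N.

(* An oriented path of length n = size P is encoded by a sequence of n
   booleans: its vertices are p_0, ..., p_n and edge i joins p_i and p_(i+1),
   oriented p_i -> p_(i+1) if nth false P i = true, and p_(i+1) -> p_i otherwise. *)

Definition directed_segment (P : seq bool) (i m : nat) : bool :=
  (i + m <= size P)%N && all (fun j => nth false P (i + j) == nth false P i) (iota 0 m).

Definition lpath (P : seq bool) : nat :=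
  \max_(i < size P) \max_(m < (size P).+1 | directed_segment P i m) m.

Definition contains_path (T : finType) (E : rel T) (P : seq bool) : Prop :=
  exists f : 'I_(size P).+1 -> T, injective f /\
    forall i : 'I_(size P),
      if nth false P i then E (f (widen_ord (leqnSn _) i)) (f (lift ord0 i))
      else E (f (lift ord0 i)) (f (widen_ord (leqnSn _) i)).

Definition independent (T : finType) (E : rel T) (S : {set T}) : Prop :=
  forall x y, x \in S -> y \in S -> ~~ E x y.

(* Main.v *)
Require Import Defs.
From HB Require Import structures.
From mathcomp Require Import all_boot all_order all_algebra.
From mathcomp Require Import zify.
From Stdlib Require Import Classical ClassicalEpsilon.
Set Implicit Arguments. Unset Strict Implicit. Unset Printing Implicit Defensive.

Definition fwdr (T : finType) (R : rel T) (W : {set T}) (s : T -> nat) : rel T :=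
  fun x y => [&& R x y, x \in W, y \in W & s x < s y].

Definition backs (T : finType) (R : rel T) (W : {set T}) (s : T -> nat) : {set T * T} :=
  [set p | [&& R p.1 p.2, p.1 \in W, p.2 \in W & s p.2 <= s p.1]].

Definition goodb (T : finType) (R : rel T) (W : {set T}) (s : T -> nat) : bool :=
  [forall p in backs R W s, connect (fwdr R W s) p.2 p.1].

Lemma good_step (T : finType) (R : rel T) (W : {set T}) (s : T -> nat) :
  ~~ goodb R W s -> exists s', #|backs R W s'| < #|backs R W s|.
Proof.
case/forall_inPn => [[u v]] /= Huv Hc.
set Rs := [set x | connect (fwdr R W s) v x].
exists (fun x => if x \in Rs then s x + (s u).+1 else s x).
apply: proper_card; apply/properP; split.
  apply/subsetP => [[x y]]; rewrite !inE /= => /and4P [Rxy Wx Wy Hle].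
  rewrite Rxy Wx Wy /=.
  case Hx: (connect (fwdr R W s) v x); case Hy: (connect (fwdr R W s) v y);
    rewrite Hx Hy in Hle; try lia.
  rewrite leqNgt; apply/negP => Hlt.
  move/negP: Hy; apply.
  apply: connect_trans Hx _.
  by apply: connect1; rewrite /fwdr Rxy Wx Wy Hlt.
exists (u, v) => //.
rewrite !inE /=.
have Hu : connect (fwdr R W s) v u = false by apply/negbTE.
rewrite Hu connect0. apply/negP => /and4P [_ _ _]. lia.
Qed.

Lemma good_exists (T : finType) (R : rel T) (W : {set T}) :
  exists s, goodb R W s.
Proof.
suff H : forall m (s : T -> nat), #|backs R W s| <= m -> exists s', goodb R W s'.
  exact: (H _ (fun _ => 0) (leqnn _)).
elim=> [|m IH] s Hs.
  exists s; apply/forall_inP => p Hp.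
  by move: Hs; rewrite leqn0 => /eqP /cards0_eq Hs; rewrite Hs inE in Hp.
case Hg: (goodb R W s); first by exists s.
have [s' Hs'] := good_step (negbT Hg).
apply: (IH s'); lia.
Qed.

Definition has_lv (T : finType) (R : rel T) (W : {set T}) (s : T -> nat) (t : nat) (x : T) : Prop :=
  exists q, size q + 1 = t /\ path (fun a b => fwdr R W s b a) x q.

Definition hasb (T : finType) (R : rel T) (W : {set T}) (s : T -> nat) (t : nat) (x : T) : bool :=
  if excluded_middle_informative (has_lv R W s t x) then true else false.

Lemma hasbP (T : finType) (R : rel T) (W : {set T}) (s : T -> nat) t x :
  reflect (has_lv R W s t x) (hasb R W s t x).
Proof. by rewrite /hasb; case: excluded_middle_informative => H; constructor. Qed.

Lemma rpath_size (T : finType) (R : rel T) (W : {set T}) (s : T -> nat) x q :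
  path (fun a b => fwdr R W s b a) x q -> size q <= s x.
Proof.
elim: q x => [//|a q IH] x /= /andP [H1 H2].
have := IH _ H2. move: H1 => /and4P [_ _ _ ?]. lia.
Qed.

Lemma rpath_uniq (T : finType) (R : rel T) (W : {set T}) (s : T -> nat) x q :
  path (fun a b => fwdr R W s b a) x q ->
  [/\ uniq (x :: q), all (fun b => s b < s x) q, all (mem W) q
    & path (fun a b => R b a) x q].
Proof.
elim: q x => [//|a q IH] x /= /andP [H1 H2].
have [U1 A1 A2 P2] := IH _ H2.
move: H1 => /and4P [Rax Wa Wx Hlt].
have A3 : all (fun b => s b < s x) q.
  by apply/allP => b Hb; have := allP A1 b Hb => /=; lia.
rewrite A3 Hlt Wa A2 Rax P2 /= ?andbT.
move: U1 => /= /andP [-> ->]; rewrite ?andbT.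
split => //.
rewrite in_cons negb_or; apply/andP; split.
  by apply/negP => /eqP Ex; rewrite Ex ltnn in Hlt.
apply/negP => Hx; have := allP A3 x Hx; by rewrite ltnn.
Qed.

Lemma hasb_bound (T : finType) (R : rel T) (W : {set T}) (s : T -> nat) x t :
  hasb R W s t x -> t <= (s x).+1.
Proof. move/hasbP => [q [<- Hq]]; have := rpath_size Hq; lia. Qed.

Lemma hasb_ex (T : finType) (R : rel T) (W : {set T}) (s : T -> nat) x :
  exists t, hasb R W s t x.
Proof. by exists 1; apply/hasbP; exists [::]. Qed.

Definition lev (T : finType) (R : rel T) (W : {set T}) (s : T -> nat) (x : T) : nat :=
  ex_maxn (hasb_ex R W s x) (@hasb_bound T R W s x).

Lemma levP (T : finType) (R : rel T) (W : {set T}) (s : T -> nat) x :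
  has_lv R W s (lev R W s x) x /\ forall t, has_lv R W s t x -> t <= lev R W s x.
Proof.
rewrite /lev; case: ex_maxnP => i Hi Hmax; split; first by apply/hasbP.
by move=> t /hasbP; apply: Hmax.
Qed.

Lemma lev_fwd (T : finType) (R : rel T) (W : {set T}) (s : T -> nat) x y :
  fwdr R W s y x -> lev R W s y < lev R W s x.
Proof.
move=> Hyx. have [[q [Hq Hp]] _] := levP R W s y.
have [_ Hm] := levP R W s x.
apply: Hm; exists (y :: q); split; first by rewrite /= -Hq; lia.
by rewrite /= Hyx Hp.
Qed.

Lemma lev_path (T : finType) (R : rel T) (W : {set T}) (s : T -> nat) v p :
  path (fwdr R W s) v p -> p != [::] -> lev R W s v < lev R W s (last v p).
Proof.
elim: p v => [//|a p IH] v /= /andP [H1 H2] _.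
have := lev_fwd H1.
case: p IH H2 => [|b p] IH H2 //=.
have := IH a H2 isT => /=; lia.
Qed.

Lemma GRpath (T : finType) (R : rel T) (W : {set T}) (L : nat) :
  (forall x, ~~ R x x) -> 0 < L ->
  (forall S : {set T}, S \subset W -> (forall x y, x \in S -> y \in S -> ~~ R x y) ->
     L * #|S| < #|W|) ->
  exists x q, [/\ x \in W, all (mem W) q, size q = L.-1, uniq (x :: q)
                & path (fun a b => R b a) x q].
Proof.
move=> Hirr HL Hind.
have [s Hs] := good_exists R W.
have Hneq : forall u v, R u v -> u \in W -> v \in W -> lev R W s u != lev R W s v.
  move=> u v Ruv Wu Wv; case: (ltnP (s u) (s v)) => H.
    have := @lev_fwd _ R W s v u; rewrite /fwdr Ruv Wu Wv H => /(_ isT); lia.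
  have Hb : (u, v) \in backs R W s by rewrite inE /= Ruv Wu Wv H.
  have := forall_inP Hs _ Hb => /= /connectP [p Hp Hl].
  case: p Hp Hl => [|a p] Hp Hl.
    by rewrite /= in Hl; rewrite Hl (negbTE (Hirr v)) in Ruv.
  have := lev_path Hp isT; rewrite -Hl; lia.
case: L HL Hind => [//|L'] _ Hind.
case: (boolP [exists x in W, L' < lev R W s x]).
  case/exists_inP => x Wx Hx.
  have [[q [Hq Hp]] _] := levP R W s x.
  have [U1 _ A2 P2] := rpath_uniq Hp.
  exists x, (take L' q); split => //.
  - by apply/allP => y /mem_take Hy; apply: (allP A2).
  - by rewrite size_takel //; lia.
  - by have := take_uniq L'.+1 U1.
  - by move: P2; rewrite -{1}(cat_take_drop L' q) cat_path => /andP [].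
move=> Hall.
have Hlt : forall x, x \in W -> lev R W s x < L'.+1.
  move=> x Wx; move: Hall; rewrite negb_exists => /forallP /(_ x).
  by rewrite Wx /= -leqNgt.
pose C (c : nat) := [set x in W | lev R W s x == c].
have HC : forall c, L'.+1 * #|C c| < #|W|.
  move=> c; apply: Hind.
    by apply/subsetP => x; rewrite inE => /andP [].
  move=> x y; rewrite !inE => /andP [Wx /eqP Hx] /andP [Wy /eqP Hy].
  apply/negP => Rxy; have := Hneq _ _ Rxy Wx Wy; by rewrite Hx Hy eqxx.
have HW : 0 < #|W| by have := HC 0; lia.
have Hsum : #|W| = \sum_(c < L'.+1) #|C c|.
  rewrite -sum1_card (partition_big (fun x => inord (lev R W s x) : 'I_L'.+1) predT) //=.
  apply: eq_bigr => c _; rewrite -sum1_card; apply: eq_bigl => x.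
  rewrite inE; case Wx: (x \in W) => //=.
  by rewrite -(inj_eq val_inj) /= inordK //; apply: Hlt.
have : L'.+1 * #|W| <= L'.+1 * (#|W|).-1.
  rewrite {1}Hsum big_distrr /=.
  apply: leq_trans (_ : \sum_(c < L'.+1) (#|W|).-1 <= _).
    by apply: leq_sum => c _; have := HC c; lia.
  by rewrite sum_nat_const card_ord.
nia.
Qed.

Fixpoint emb (T : finType) (E : rel T) (v : T) (Q : seq bool) (t : seq T) : bool :=
  match Q, t with
  | b :: Q', w :: t' => (if b then E v w else E w v) && emb E w Q' t'
  | [::], [::] => true
  | _, _ => false
  end.

Lemma emb_cat (T : finType) (E : rel T) v Q1 Q2 t1 t2 :
  size t1 = size Q1 ->
  emb E v (Q1 ++ Q2) (t1 ++ t2) = emb E v Q1 t1 && emb E (last v t1) Q2 t2.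
Proof.
elim: Q1 t1 v => [|b Q1 IH] [|w t1] v //= [Hs].
by rewrite IH // andbA.
Qed.

Lemma emb_nseq (T : finType) (E : rel T) b u w ws :
  emb E u (nseq (size ws).+1 b) (w :: ws) =
  (if b then E u w else E w u) && path (fun a c => if b then E a c else E c a) w ws.
Proof.
elim: ws u w => [|w' ws IH] u w /=; first by rewrite andbT.
by rewrite -IH.
Qed.

Lemma emb_nth (T : finType) (E : rel T) v Q t :
  emb E v Q t -> size t = size Q /\
  forall i, i < size Q ->
    if nth false Q i then E (nth v (v :: t) i) (nth v (v :: t) i.+1)
    else E (nth v (v :: t) i.+1) (nth v (v :: t) i).
Proof.
elim: Q t v => [|b Q IH] [|w t] v //= /andP [H1 H2].
have [Hs Hn] := IH _ _ H2; split; first by rewrite Hs.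
case=> [|i] /= Hi; first by [].
have := Hn i Hi.
by rewrite !(set_nth_default v w) //= Hs; lia.
Qed.

Lemma ds_drop (P : seq bool) j i m : j <= size P ->
  directed_segment (drop j P) i m -> directed_segment P (j + i) m.
Proof.
move=> Hj; rewrite /directed_segment size_drop => /andP [H1 /allP H2].
apply/andP; split; first by lia.
apply/allP => x Hx; have := H2 x Hx; by rewrite !nth_drop addnA.
Qed.

Lemma run_facts (Q : seq bool) b Q0 : Q = b :: Q0 ->
  let m := find (fun c => c != b) Q in
  [/\ 0 < m, m <= size Q, Q = nseq m b ++ drop m Q, directed_segment Q 0 m
    & forall c Q1, drop m Q = c :: Q1 -> c = ~~ b].
Proof.
move=> HQ m.
have Hm0 : 0 < m by rewrite /m HQ /= eqxx.
have Hms : m <= size Q by apply: find_size.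
have Hbf : forall i, i < m -> nth false Q i = b.
  by move=> i Hi; have := before_find false Hi => /negbFE /eqP.
have Hb0 : nth false Q 0 = b by rewrite HQ.
split => //.
- rewrite -{1}(cat_take_drop m Q); congr (_ ++ _).
  have Hsz : size (take m Q) = m by rewrite size_takel.
  rewrite -{2}Hsz; apply/all_pred1P; apply/(all_nthP false) => i Hi.
  rewrite Hsz in Hi; by rewrite /= nth_take // Hbf.
- apply/andP; split => //; apply/allP => j; rewrite mem_iota add0n => /andP [_ Hj].
  by rewrite add0n Hbf // Hb0.
- move=> c Q1 Hd.
  have Hlt : m < size Q by move: (size_drop m Q); rewrite Hd /=; lia.
  have Hh : has (fun c => c != b) Q by rewrite has_find.
  have Hn : nth false Q m != b by exact: (nth_find false Hh).
  have : nth false (drop m Q) 0 = c by rewrite Hd.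
  rewrite nth_drop addn0 => Hc; move: Hn; rewrite Hc; by case: (b); case: (c).
Qed.

Lemma embed (T : finType) (E : rel T) (X Y : {set T}) (k n l : nat) :
  oriented E -> [disjoint X & Y] ->
  (forall x, x \in X -> k <= #|[set y in Y | E x y]|) ->
  (forall y, y \in Y -> k <= #|[set x in X | E x y]|) ->
  (forall S : {set T}, independent E S -> l * #|S| < k - n) ->
  forall Q, (forall i m, directed_segment Q i m -> m <= l) ->
  forall (U : {set T}) (v : T), v \notin U -> #|U| + size Q <= n ->
  (if Q is b :: _ then (if b then v \in X else v \in Y) else true) ->
  exists t, [/\ emb E v Q t, uniq (v :: t) & all (fun w => w \notin U) t].
Proof.
move=> [Hirr Hasym] Hdis HX HY HI.
suff H : forall N Q, size Q < N -> (forall i m, directed_segment Q i m -> m <= l) ->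
  forall (U : {set T}) (v : T), v \notin U -> #|U| + size Q <= n ->
  (if Q is b :: _ then (if b then v \in X else v \in Y) else true) ->
  exists t, [/\ emb E v Q t, uniq (v :: t) & all (fun w => w \notin U) t].
  by move=> Q; apply: (H (size Q).+1).
elim=> [//|N IH] Q HN Hrun U v HvU HUn Hv.
case HQ: Q Hv => [|b Q0] Hv; first by exists [::].
simpl in Hv.
have [Hm0 Hms HQc Hds Hhd] := run_facts HQ.
set m := find (fun c => c != b) Q in Hm0 Hms HQc Hds Hhd.
have Hml : m <= l by apply: (Hrun 0).
have HsQ : 0 < size Q by rewrite HQ.
pose Nb := if b then [set y in Y | E v y] else [set y in X | E y v].
have HNb : k <= #|Nb| by rewrite /Nb; case: (b) Hv => Hv; [apply: HX | apply: HY].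
pose W := Nb :\: (v |: U).
have HW : k - n <= #|W|.
  rewrite /W cardsD.
  have : #|Nb :&: (v |: U)| <= #|v |: U| by apply/subset_leq_card/subsetIr.
  rewrite cardsU1; lia.
pose R := fun a c => if b then E c a else E a c.
have HirrR : forall x, ~~ R x x by move=> x; rewrite /R; case: (b).
have [x [q [Wx Wq Hsq Uq Pq]]] : exists x q, [/\ x \in W, all (mem W) q, size q = m.-1,
     uniq (x :: q) & path (fun a c => R c a) x q].
  apply: GRpath => // S HSW HSind.
  have HSE : independent E S.
    move=> x y Hx Hy; have h1 := HSind y x Hy Hx; have h2 := HSind x y Hx Hy; rewrite /R in h1 h2; by case: (b) h1 h2.
  have := HI S HSE; have : m * #|S| <= l * #|S| by apply: leq_mul.
  lia.
have Pq' : path (fun a c => if b then E a c else E c a) x q by [].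
have HWsub : forall y, y \in W -> [/\ y \notin U, y != v & y \in (if b then Y else X)].
  move=> y; rewrite /W /Nb; case: (b); rewrite !inE negb_or => /andP [/andP [H1 H2] /andP [H3 H4]]; by split.
have HWNb : forall y, y \in W -> if b then E v y else E y v.
  by move=> y; rewrite /W /Nb; case: (b); rewrite !inE => /andP [_ /andP [_ ->]].
set z := last x q.
have Hxq : all (mem W) (x :: q) by rewrite /= Wx.
have Wz : z \in W by apply: (allP Hxq); apply: mem_last.
have Huq : uniq (rcons (belast x q) z) by rewrite -lastI.
rewrite rcons_uniq in Huq; case/andP: Huq => zb Ub.
pose U' := (v |: U) :|: [set y in belast x q].
have [zU zv zXY] := HWsub z Wz.
have HzU' : z \notin U'.
  by rewrite /U' !inE !negb_or zU zv zb.
have HU' : #|U'| <= #|U| + m.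
  rewrite /U' cardsU cardsU1 cardsE.
  have := card_size (belast x q); rewrite size_belast Hsq.
  move: (v \notin U) #|U| #|belast x q| #|(v |: U) :&: [set y0 in belast x q]| Hm0.
  clear; move=> [] a c d Hm; lia.
have Hsd : size (drop m Q) = size Q - m by rewrite size_drop.
have [t' [Et' Ut' At']] : exists t', [/\ emb E z (drop m Q) t', uniq (z :: t')
                          & all (fun w => w \notin U') t'].
  apply: IH.
  - rewrite Hsd; move: HN Hm0 HsQ; clear; lia.
  - move=> i m' Hd; apply: (Hrun (m + i)); exact: (ds_drop Hms Hd).
  - exact: HzU'.
  - rewrite Hsd; move: HUn HU' Hm0 Hms; clear; lia.
  - case Hd: (drop m Q) => [//|c Q1]; rewrite (Hhd c Q1 Hd).
    by case: (b) zXY.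
exists ((x :: q) ++ t'); split.
- rewrite -HQ HQc emb_cat; last by rewrite size_nseq /= Hsq; move: Hm0; clear; lia.
  have Hmq : m = (size q).+1 by rewrite Hsq; move: Hm0; clear; lia.
  rewrite {1}Hmq.
  by rewrite emb_nseq HWNb //= Pq' Et'.
- rewrite cons_uniq cat_uniq Uq /=.
  have vnxq : v \notin x :: q.
    apply/negP => Hvin; have := allP Hxq v Hvin => /= /HWsub [_].
    by rewrite eqxx.
  rewrite -cat_cons mem_cat negb_or vnxq /=.
  have -> : v \notin t'.
    apply/negP => Hvt; have := allP At' v Hvt; by rewrite /U' !inE eqxx.
  move: Ut' => /andP [zt' Ut']. apply/and3P; split => //.
  apply/hasPn => w Hw; have := allP At' w Hw.
  rewrite /U' !inE !negb_or => /andP [_ Hwb].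
  suff : w \notin x :: q by rewrite in_cons negb_or.
  rewrite lastI mem_rcons in_cons negb_or Hwb andbT.
  apply/negP => /eqP Hwz; by move: zt'; rewrite /z -Hwz Hw.
- rewrite all_cat; apply/andP; split.
    by apply/allP => w Hw; have [] := HWsub w (allP Hxq w Hw).
  apply/allP => w Hw; have := allP At' w Hw.
  by rewrite /U' !inE !negb_or => /andP [/andP [_ ->]].
Qed.
Unset Implicit Arguments.
Import Order.TTheory GRing.Theory Num.Theory.

Lemma ratbound (k n l s : nat) : (0 < l)%N -> (k - n <= l * s)%N ->
  ((k%:Q - n%:Q) / l%:Q <= s%:Q)%R.
Proof.
move=> Hl H; rewrite ler_pdivrMr ?ltr0n //.
case: (leqP k n) => Hkn.
  apply: le_trans (_ : 0 <= _)%R; first by rewrite subr_le0 ler_nat.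
  by rewrite -natrM ler0n.
by rewrite -natrB ?(ltnW Hkn) // -natrM ler_nat mulnC.
Qed.

Theorem mainTheorem7 (T : finType) (E : rel T) (k n : nat) (P : seq bool) :
  oriented E -> (0 < k)%N -> size P = n -> (1 <= lpath P)%N ->
  (exists X Y : {set T}, mindegree_pair E k X Y) ->
  contains_path E P \/
  exists S : {set T}, independent E S /\
    ((k%:Q - n%:Q) / (lpath P)%:Q <= (#|S|)%:Q)%R.
Proof.
move=> Hor Hk HPn Hl [X [Y [Hdis HX0 HY0 HXd HYd]]].
case: (classic (exists S, independent E S /\ (k - n <= lpath P * #|S|)%N)) => [[S [HS HSb]] | Hno].
  by right; exists S; split => //; apply: ratbound.
left.
have HI : forall S, independent E S -> (lpath P * #|S| < k - n)%N.
  move=> S HS; rewrite ltnNge; apply/negP => H; apply: Hno; by exists S.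
have Hrun : forall i m, directed_segment P i m -> (m <= lpath P)%N.
  move=> i m Hd; case: m Hd => [//|m] Hd.
  have Hd' := Hd; move: Hd' => /andP [Him _].
  have Hi : (i < size P)%N by lia.
  have Hm : (m.+1 < (size P).+1)%N by lia.
  rewrite /lpath.
  apply: leq_trans (_ : \max_(m0 < (size P).+1 | directed_segment P (Ordinal Hi) m0) m0 <= _)%N.
    by apply: (@leq_bigmax_cond _ _ (fun m0 : 'I_(size P).+1 => (m0 : nat)) (Ordinal Hm)).
  by apply: (@leq_bigmax_cond _ predT (fun i0 : 'I_(size P) => \max_(m0 < (size P).+1 | directed_segment P i0 m0) m0) (Ordinal Hi)).
case HP: P Hrun => [|b P0] Hrun.
  by move: Hl; rewrite HP /lpath big_ord0.
rewrite -HP in Hrun.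
have [v Hv] : exists v, if b then v \in X else v \in Y.
  by case: (b); [case/set0Pn: HX0 | case/set0Pn: HY0] => v Hv; exists v.
have Hc : (#|(set0 : {set T})| + size P <= n)%N by rewrite cards0 add0n HPn.
have Hv' : ((if P is b :: _ then (if b then v \in X else v \in Y) else true) : bool) by rewrite HP.
have [t [Et Ut At]] := embed Hor Hdis HXd HYd HI Hrun (U := set0) (v := v) (ltac:(by rewrite in_set0)) Hc Hv'.
rewrite -HP.
have [Hs Hn] := emb_nth Et.
exists (fun i : 'I_(size P).+1 => nth v (v :: t) i); split.
  move=> i j /eqP; rewrite nth_uniq //=; last by rewrite Hs.
    by move=> /eqP /val_inj.
  by rewrite Hs.
move=> i; have := Hn i (ltn_ord i).
by rewrite lift0 /=.
Qed.
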